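(* Let $q(m,n)=am^2+bmn+cn^2$ with $a,b,c\in\mathbb{Z}$ be an indefinite form whose discriminant $\Delta=b^2-4ac>0$ is not a perfect square, and let $\lambda>0$. For $k\in\mathbb{Z}$ let $A_k=\{(m,n)\in(\mathbb{Z}\setminus\{0\})\times\mathbb{Z}: q(m,n)=k\}$. Then there is a constant $C_\lambda$ depending only on $\lambda$ such that for every $k\in\mathbb{Z}$, $$\sum_{(m,n)\in A_k}\frac{1}{|m|^{\lambda}}\le C_{\lambda}\,\Delta^{(1+\lambda)/2}.$$ *)

(* Defs.v *)
From Stdlib Require Import Reals ZArith List.
Open Scope R_scope.

Definition qform (a b c m n : Z) : Z := (a*m*m + b*m*n + c*n*n)%Z.

Definition qdisc (a b c : Z) : Z := (b*b - 4*a*c)%Z.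

Definition A_set (a b c k : Z) (p : Z * Z) : Prop :=
  fst p <> 0%Z /\ qform a b c (fst p) (snd p) = k.

Definition list_sum (f : Z * Z -> R) (L : list (Z * Z)) : R :=
  fold_right (fun p acc => f p + acc) 0 L.

(* The (possibly infinite) sum of a nonnegative family f over the set P is
   bounded by B: by definition, the sum of a nonnegative family is the
   supremum of its finite partial sums, so this says every finite partial
   sum (over distinct elements of P) is at most B. *)
Definition nonneg_sum_le (P : Z * Z -> Prop) (f : Z * Z -> R) (B : R) : Prop :=
  forall L : list (Z * Z), NoDup L -> Forall P L -> list_sum f L <= B.

(* Main.v *)
Require Import Defs.
From Stdlib Require Import Reals ZArith List Lia Lra Znumtheory ClassicalEpsilon.
Import ListNotations.

Open Scope Z_scope.

Definition Bf (a b c m1 n1 m2 n2 : Z) : Z := 2*a*m1*m2 + b*(m1*n2 + n1*m2) + 2*c*n1*n2.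

Lemma lin_div (k u v w al be ga : Z) : (k | u) -> (k | v) -> (k | w) ->
  (k | al*u + be*v + ga*w).
Proof.
  intros Hu Hv Hw. apply Z.divide_add_r; [apply Z.divide_add_r|];
  apply Z.divide_mul_r; assumption.
Qed.

Lemma core_div (a b c k' m1 n1 x1 y1 X Y X' Y' t1 t2 t3 : Z) :
  m1*y1 - n1*x1 = 1 -> X*Y' - X'*Y = 1 -> qform a b c m1 n1 = k' ->
  qform a b c (X*m1+Y*x1) (X*n1+Y*y1) = k' ->
  (2*k' | Bf a b c (X*m1+Y*x1) (X*n1+Y*y1) (X'*m1+Y'*x1) (X'*n1+Y'*y1) - Bf a b c m1 n1 x1 y1) ->
  t1*a + t2*b + t3*c = 1 -> (k' | Y).
Proof.
  intros Hd HXY Hk1 Hk2 Hb Ht.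
  set (be := Bf a b c m1 n1 x1 y1). set (c' := qform a b c x1 y1).
  assert (E1 : qform a b c (X*m1+Y*x1) (X*n1+Y*y1) = X*X*k' + X*Y*be + Y*Y*c').
  { subst be c'. rewrite <- Hk1. unfold qform, Bf. ring. }
  assert (E2 : Bf a b c (X*m1+Y*x1) (X*n1+Y*y1) (X'*m1+Y'*x1) (X'*n1+Y'*y1) - be
             = 2*(X*X'*k' + Y*(X'*be + Y'*c'))).
  { assert (E : Bf a b c (X*m1+Y*x1) (X*n1+Y*y1) (X'*m1+Y'*x1) (X'*n1+Y'*y1)
               = 2*X*X'*k' + (X*Y' + X'*Y)*be + 2*Y*Y'*c').
    { subst be c'. rewrite <- Hk1. unfold qform, Bf. ring. }
    rewrite E. replace (X*Y') with (1 + X'*Y) by lia. ring. }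
  assert (HA : (k' | Y*(X'*be + Y'*c'))).
  { assert (Hb2 : (2*k' | 2*(X*X'*k' + Y*(X'*be + Y'*c')))) by (rewrite <- E2; exact Hb).
    destruct Hb2 as [u Hu].
    exists (u - X*X'). nia. }
  assert (HB : (k' | Y*(X*be + Y*c'))).
  { exists (1 - X*X). rewrite E1 in Hk2. nia. }
  assert (HC : (k' | Y*c')).
  { replace (Y*c') with (X*(Y*(X'*be + Y'*c')) + (-X')*(Y*(X*be + Y*c')) + 0*0).
    - apply lin_div; auto. apply Z.divide_0_r.
    - transitivity (Y*c'*(X*Y'-X'*Y)); [ring | rewrite HXY; ring]. }
  assert (HBe : (k' | Y*be)).
  { replace (Y*be) with (Y'*(Y*(X*be + Y*c')) + (-Y)*(Y*(X'*be + Y'*c')) + 0*0).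
    - apply lin_div; auto. apply Z.divide_0_r.
    - transitivity (Y*be*(X*Y'-X'*Y)); [ring | rewrite HXY; ring]. }
  assert (HK : (k' | Y*k')) by (apply Z.divide_mul_r; apply Z.divide_refl).
  assert (Ha : a = y1*y1*k' - y1*n1*be + n1*n1*c').
  { transitivity (a*(m1*y1-n1*x1)*(m1*y1-n1*x1)). rewrite Hd; ring.
    subst be c'; rewrite <- Hk1; unfold qform, Bf; ring. }
  assert (Hb' : b = -2*x1*y1*k' + (m1*y1+n1*x1)*be - 2*n1*m1*c').
  { transitivity (b*(m1*y1-n1*x1)*(m1*y1-n1*x1)). rewrite Hd; ring.
    subst be c'; rewrite <- Hk1; unfold qform, Bf; ring. }
  assert (Hc : c = x1*x1*k' - x1*m1*be + m1*m1*c').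
  { transitivity (c*(m1*y1-n1*x1)*(m1*y1-n1*x1)). rewrite Hd; ring.
    subst be c'; rewrite <- Hk1; unfold qform, Bf; ring. }
  assert (Da : (k' | Y*a)).
  { replace (Y*a) with (y1*y1*(Y*k') + (-y1*n1)*(Y*be) + n1*n1*(Y*c'))
      by (rewrite Ha; ring). apply lin_div; auto. }
  assert (Db : (k' | Y*b)).
  { replace (Y*b) with (-2*x1*y1*(Y*k') + (m1*y1+n1*x1)*(Y*be) + (-2*n1*m1)*(Y*c'))
      by (rewrite Hb'; ring). apply lin_div; auto. }
  assert (Dc : (k' | Y*c)).
  { replace (Y*c) with (x1*x1*(Y*k') + (-x1*m1)*(Y*be) + m1*m1*(Y*c'))
      by (rewrite Hc; ring). apply lin_div; auto. }
  replace Y with (t1*(Y*a) + t2*(Y*b) + t3*(Y*c)).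
  - apply lin_div; auto.
  - transitivity (Y*(t1*a+t2*b+t3*c)); [ring | rewrite Ht; ring].
Qed.

Open Scope Z_scope.

Lemma divex (g t : Z) : g <> 0 -> (g | t) -> t = g * (t / g).
Proof. intros H [q ->]. rewrite Z.div_mul by exact H. ring. Qed.

Definition rk (N x0 x : Z) : Z * Z :=
  let t := (x - x0) mod N in let g := Z.gcd t N in let t1 := t / g in
  let N1 := N / g in let h := Z.gcd g N1 in (g, t1 / (N1 / h)).

Lemma rk_facts (D N x0 x : Z) : 0 < N -> (N | x0*x0 - D) -> (N | x*x - D) ->
  let t := (x - x0) mod N in let g := Z.gcd t N in
  0 < g /\ (g | N) /\ t = g * (t / g) /\ N = g * (N / g) /\ 0 < N / g /\
  0 <= t / g < N / g /\ (N / g | g * (t / g) + 2 * x0) /\ (N | (x - x0) - t).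
Proof.
  intros HN H0 Hx t g.
  assert (Ht : 0 <= t < N) by (apply Z.mod_pos_bound; lia).
  assert (Hg0 : 0 <= g) by apply Z.gcd_nonneg.
  assert (Hgn : g <> 0) by (intro E; apply Z.gcd_eq_0_r in E; lia).
  assert (Hgt : (g | t)) by apply Z.gcd_divide_l.
  assert (HgN : (g | N)) by apply Z.gcd_divide_r.
  assert (Et : t = g * (t / g)) by (apply divex; assumption).
  assert (EN : N = g * (N / g)) by (apply divex; assumption).
  assert (HN1 : 0 < N / g) by nia.
  assert (Ht1 : 0 <= t / g < N / g) by nia.
  assert (Hmod : (N | (x - x0) - t)).
  { exists ((x - x0) / N). unfold t. rewrite Z.mod_eq by lia. ring. }
  assert (Hprod : (N | t * (t + 2 * x0))).
  { destruct Hmod as [q Hq]. destruct Hx as [u Hu]. destruct H0 as [v Hv].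
    exists (u - v - 2*q*x + q*q*N). nia. }
  assert (Hcop : Z.gcd (t / g) (N / g) = 1) by (apply Z.gcd_div_gcd; auto).
  split; [lia|]. split; [assumption|]. split; [assumption|]. split; [assumption|].
  split; [assumption|]. split; [assumption|]. split; [|assumption].
  apply Z.gauss with (m := t / g).
  - rewrite EN, Et in Hprod. rewrite <- Et.
    rewrite <- Z.mul_assoc in Hprod. apply Z.mul_divide_cancel_l in Hprod; [|assumption].
    rewrite Et at 2. exact Hprod.
  - rewrite Z.gcd_comm. exact Hcop.
Qed.

Lemma rk_inj (D N x0 x x' : Z) : 0 < N -> 0 <= x < N -> 0 <= x' < N ->
  (N | x0*x0 - D) -> (N | x*x - D) -> (N | x'*x' - D) ->
  rk N x0 x = rk N x0 x' -> x = x'.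
Proof.
  intros HN Hx Hx' H0 H1 H2 E.
  pose proof (rk_facts D N x0 x HN H0 H1) as F.
  pose proof (rk_facts D N x0 x' HN H0 H2) as F'.
  cbv zeta in F, F'. unfold rk in E. cbv zeta in E.
  set (t := (x - x0) mod N) in *. set (t' := (x' - x0) mod N) in *.
  injection E as Eg Ei.
  rewrite <- Eg in F', Ei.
  set (g := Z.gcd t N) in *.
  destruct F as (Hg & HgN & Et & EN & HN1 & Ht1 & Hd & Hm).
  destruct F' as (_ & _ & Et' & _ & _ & Ht1' & Hd' & Hm').
  set (N1 := N / g) in *. set (t1 := t / g) in *. set (t1' := t' / g) in *.
  set (h := Z.gcd g N1) in *.
  assert (Hh0 : 0 <= h) by apply Z.gcd_nonneg.
  assert (Hhn : h <> 0) by (intro Z0; apply Z.gcd_eq_0_r in Z0; lia).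
  assert (EN1 : N1 = h * (N1 / h)) by (apply divex; [assumption | apply Z.gcd_divide_r]).
  assert (Eg1 : g = h * (g / h)) by (apply divex; [assumption | apply Z.gcd_divide_l]).
  assert (Hc : Z.gcd (g / h) (N1 / h) = 1) by (apply Z.gcd_div_gcd; auto).
  set (N2 := N1 / h) in *. set (g2 := g / h) in *.
  assert (HN2 : 0 < N2) by nia.
  assert (Hdiff : (N2 | t1 - t1')).
  { apply Z.gauss with (m := g2); [| rewrite Z.gcd_comm; exact Hc].
    destruct Hd as [u Hu]. destruct Hd' as [v Hv].
    exists (u - v). rewrite EN1 in Hu, Hv. rewrite Eg1 in Hu, Hv.
    apply Z.mul_reg_l with (p := h); [assumption|]. nia. }
  assert (Et1 : t1 = t1').
  { destruct Hdiff as [s Hs].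
    rewrite (Z.div_mod t1 N2) by lia. rewrite (Z.div_mod t1' N2) by lia.
    rewrite Ei. f_equal.
    replace t1 with (t1' + s * N2) by lia. apply Z_mod_plus_full. }
  assert (Ett : t = t') by (rewrite Et, Et'; fold t1 t1'; rewrite Et1; reflexivity).
  destruct Hm as [u Hu]. destruct Hm' as [v Hv].
  assert (x - x' = (u - v) * N) by lia.
  assert (u - v = 0) by nia. lia.
Qed.

Lemma rk_bound (D N x0 x : Z) : 0 < N -> 0 < D -> (N | x0*x0 - D) -> (N | x*x - D) ->
  0 < fst (rk N x0 x) /\ (fst (rk N x0 x) | N) /\
  0 <= snd (rk N x0 x) < Z.sqrt (4 * D).
Proof.
  intros HN HD H0 H1.
  pose proof (rk_facts D N x0 x HN H0 H1) as F. cbv zeta in F.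
  unfold rk; cbv zeta; simpl.
  set (t := (x - x0) mod N) in *. set (g := Z.gcd t N) in *.
  destruct F as (Hg & HgN & Et & EN & HN1 & Ht1 & Hd & Hm).
  set (N1 := N / g) in *. set (t1 := t / g) in *.
  set (h := Z.gcd g N1) in *.
  assert (Hh0 : 0 <= h) by apply Z.gcd_nonneg.
  assert (Hhn : h <> 0) by (intro Z0; apply Z.gcd_eq_0_r in Z0; lia).
  assert (EN1 : N1 = h * (N1 / h)) by (apply divex; [assumption | apply Z.gcd_divide_r]).
  assert (Eg1 : g = h * (g / h)) by (apply divex; [assumption | apply Z.gcd_divide_l]).
  set (N2 := N1 / h) in *. set (g2 := g / h) in *.
  assert (HN2 : 0 < N2) by nia.
  split; [assumption|]. split; [assumption|].
  assert (Hh2x : (h | 2 * x0)).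
  { destruct Hd as [u Hu]. exists (u * N2 - g2 * t1). nia. }
  assert (Hh2D : (h * h | 4 * D)).
  { destruct Hh2x as [u Hu]. destruct H0 as [v Hv].
    exists (u * u - 4 * v * g2 * N2). nia. }
  assert (Hhh : h * h <= 4 * D) by (apply Z.divide_pos_le; [lia | assumption]).
  assert (Hhs : h <= Z.sqrt (4 * D)) by (apply Z.sqrt_le_square; lia).
  split.
  - apply Z.div_pos; lia.
  - apply Z.lt_le_trans with h; [|assumption].
    apply Z.div_lt_upper_bound; nia.
Qed.

Open Scope R_scope.

Lemma geoR (D K M1 M2 Y1 Y2 : R) : 5 <= D -> K <> 0 -> 0 < M1 -> 0 < M2 -> 0 <= Y1 -> 0 <= Y2 ->
  Y1*Y1 - D*M1*M1 = K -> Y2*Y2 - D*M2*M2 = K -> 10*M1 < 11*M2 -> 10*M2 < 11*M1 ->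
  100 * ((M1*Y2 - M2*Y1)*(M1*Y2 - M2*Y1)) * D < 121 * (K*K).
Proof.
  intros HD HK H1 H2 HY1 HY2 E1 E2 R1 R2.
  set (s := sqrt D).
  assert (Hs : 0 < s) by (apply sqrt_lt_R0; lra).
  assert (Hss : s * s = D) by (apply sqrt_sqrt; lra).
  clearbody s.
  set (u1 := Y1 - s*M1). set (u2 := Y2 - s*M2).
  assert (F1 : u1 * (Y1 + s*M1) = K) by (unfold u1; nra).
  assert (F2 : u2 * (Y2 + s*M2) = K) by (unfold u2; nra).
  assert (EP : M1*Y2 - M2*Y1 = M1*u2 - M2*u1) by (unfold u1, u2; ring).
  assert (G1 : Rabs u1 * (s*M1) <= Rabs K).
  { rewrite <- F1, Rabs_mult. rewrite (Rabs_right (Y1 + s*M1)) by nra.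
    apply Rmult_le_compat_l; [apply Rabs_pos | lra]. }
  assert (G2 : Rabs u2 * (s*M2) <= Rabs K).
  { rewrite <- F2, Rabs_mult. rewrite (Rabs_right (Y2 + s*M2)) by nra.
    apply Rmult_le_compat_l; [apply Rabs_pos | lra]. }
  assert (HKp : 0 < Rabs K) by (apply Rabs_pos_lt; exact HK).
  assert (A1 : 10 * (s * Rabs (M1*u2)) < 11 * Rabs K).
  { rewrite Rabs_mult, (Rabs_right M1) by lra.
    assert (10 * (s * (M1 * Rabs u2)) * M2 < 11 * Rabs K * M2).
    { assert (0 <= Rabs u2) by apply Rabs_pos. nra. }
    nra. }
  assert (A2 : 10 * (s * Rabs (M2*u1)) < 11 * Rabs K).
  { rewrite Rabs_mult, (Rabs_right M2) by lra.
    assert (10 * (s * (M2 * Rabs u1)) * M1 < 11 * Rabs K * M1).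
    { assert (0 <= Rabs u1) by apply Rabs_pos. nra. }
    nra. }
  assert (Ssign : (0 < u1 /\ 0 < u2) \/ (u1 < 0 /\ u2 < 0)).
  { destruct (Rlt_or_le 0 K) as [HKp'|HKn].
    - assert (P1 : 0 < Y1 + s*M1) by nra. assert (P2 : 0 < Y2 + s*M2) by nra.
      left. split.
      + destruct (Rle_or_lt u1 0) as [h|h]; [|exact h].
        assert (u1 * (Y1 + s*M1) <= 0) by nra. lra.
      + destruct (Rle_or_lt u2 0) as [h|h]; [|exact h].
        assert (u2 * (Y2 + s*M2) <= 0) by nra. lra.
    - assert (P1 : 0 < Y1 + s*M1) by nra. assert (P2 : 0 < Y2 + s*M2) by nra.
      assert (HKn' : K < 0) by lra.
      right. split.
      + destruct (Rle_or_lt 0 u1) as [h|h]; [|exact h].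
        assert (0 <= u1 * (Y1 + s*M1)) by (apply Rmult_le_pos; lra). lra.
      + destruct (Rle_or_lt 0 u2) as [h|h]; [|exact h].
        assert (0 <= u2 * (Y2 + s*M2)) by (apply Rmult_le_pos; lra). lra. }
  assert (HP : Rabs (M1*u2 - M2*u1) <= Rmax (Rabs (M1*u2)) (Rabs (M2*u1))).
  { assert (AD : forall A B, 0 <= A -> 0 <= B -> Rabs (A - B) <= Rmax (Rabs A) (Rabs B)).
    { intros A B hA hB. rewrite (Rabs_right A) by lra. rewrite (Rabs_right B) by lra.
      unfold Rmax; destruct (Rle_dec A B); unfold Rabs; destruct (Rcase_abs _); lra. }
    destruct Ssign as [[a1 a2]|[a1 a2]].
    - apply AD; nra.
    - assert (AD2 : forall A B, A <= 0 -> B <= 0 -> Rabs (A - B) <= Rmax (Rabs A) (Rabs B)).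
      { intros A B hA hB. unfold Rmax, Rabs.
        repeat destruct (Rcase_abs _); destruct (Rle_dec _ _); lra. }
      apply AD2; nra. }
  assert (HP2 : 10 * (s * Rabs (M1*Y2 - M2*Y1)) < 11 * Rabs K).
  { rewrite EP. unfold Rmax in HP. destruct (Rle_dec _ _); nra. }
  assert (HPa : 0 <= s * Rabs (M1*Y2 - M2*Y1)) by (apply Rmult_le_pos; [lra|apply Rabs_pos]).
  assert (Sq : (10 * (s * Rabs (M1*Y2 - M2*Y1))) * (10 * (s * Rabs (M1*Y2 - M2*Y1)))
              < (11 * Rabs K) * (11 * Rabs K)).
  { clear - HP2 HPa. apply Rmult_le_0_lt_compat; lra. }
  assert (Q1 : Rabs (M1*Y2 - M2*Y1) * Rabs (M1*Y2 - M2*Y1) = (M1*Y2 - M2*Y1)*(M1*Y2 - M2*Y1)).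
  { rewrite <- Rabs_mult. apply Rabs_right. apply Rle_ge. apply Rle_0_sqr. }
  assert (Q2 : Rabs K * Rabs K = K * K).
  { rewrite <- Rabs_mult. apply Rabs_right. apply Rle_ge. apply Rle_0_sqr. }
  rewrite <- Q1, <- Q2, <- Hss. nra.
Qed.

Open Scope Z_scope.
Lemma geoZ (D K M1 M2 Y1 Y2 : Z) : 5 <= D -> K <> 0 -> 0 < M1 -> 0 < M2 -> 0 <= Y1 -> 0 <= Y2 ->
  Y1*Y1 - D*M1*M1 = K -> Y2*Y2 - D*M2*M2 = K -> 10*M1 < 11*M2 -> 10*M2 < 11*M1 ->
  100 * ((M1*Y2 - M2*Y1)*(M1*Y2 - M2*Y1)) * D < 121 * (K*K).
Proof.
  intros HD HK H1 H2 HY1 HY2 E1 E2 R1 R2.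
  apply lt_IZR. rewrite !mult_IZR, !minus_IZR, !mult_IZR.
  apply geoR; try (apply IZR_le || apply IZR_lt); try lia.
  - intro h. apply HK. apply eq_IZR. exact h.
  - rewrite <- E1. rewrite minus_IZR, !mult_IZR. reflexivity.
  - rewrite <- E2. rewrite minus_IZR, !mult_IZR. reflexivity.
  - rewrite <- !mult_IZR. apply IZR_lt. lia.
  - rewrite <- !mult_IZR. apply IZR_lt. lia.
Qed.

Open Scope Z_scope.

Lemma det_small (a b c k m1 n1 m2 n2 : Z) :
  5 <= qdisc a b c -> c <> 0 -> k <> 0 ->
  qform a b c m1 n1 = k -> qform a b c m2 n2 = k -> m1 <> 0 -> m2 <> 0 ->
  (0 <? m1) = (0 <? m2) -> (0 <=? 2*c*n1 + b*m1) = (0 <=? 2*c*n2 + b*m2) ->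
  10 * Z.abs m1 < 11 * Z.abs m2 -> 10 * Z.abs m2 < 11 * Z.abs m1 ->
  Z.abs (m1*n2 - n1*m2) < Z.abs k.
Proof.
  intros HD Hc Hk Hq1 Hq2 Hm1 Hm2 Sm Sy R1 R2.
  set (y1 := 2*c*n1 + b*m1) in *. set (y2 := 2*c*n2 + b*m2) in *.
  assert (E1 : Z.abs y1 * Z.abs y1 - qdisc a b c * Z.abs m1 * Z.abs m1 = 4*c*k).
  { rewrite <- Z.mul_assoc, !Z.abs_square.
    unfold y1, qdisc. rewrite <- Hq1. unfold qform. ring. }
  assert (E2 : Z.abs y2 * Z.abs y2 - qdisc a b c * Z.abs m2 * Z.abs m2 = 4*c*k).
  { rewrite <- Z.mul_assoc, !Z.abs_square.
    unfold y2, qdisc. rewrite <- Hq2. unfold qform. ring. }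
  assert (HK4 : 4*c*k <> 0).
  { intro h. apply Z.mul_eq_0 in h. destruct h as [h|h]; [apply Z.mul_eq_0 in h; lia|lia]. }
  assert (G := geoZ (qdisc a b c) (4*c*k) (Z.abs m1) (Z.abs m2) (Z.abs y1) (Z.abs y2)
                 HD HK4 ltac:(lia) ltac:(lia) ltac:(lia) ltac:(lia) E1 E2 R1 R2).
  assert (HP : (Z.abs m1 * Z.abs y2 - Z.abs m2 * Z.abs y1) * (Z.abs m1 * Z.abs y2 - Z.abs m2 * Z.abs y1)
             = (m1 * y2 - m2 * y1) * (m1 * y2 - m2 * y1)).
  { destruct (Z.ltb_spec 0 m1); destruct (Z.ltb_spec 0 m2); try discriminate;
    destruct (Z.leb_spec 0 y1); destruct (Z.leb_spec 0 y2); try discriminate;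
    repeat first [rewrite (Z.abs_eq m1) by lia | rewrite (Z.abs_neq m1) by lia
                 | rewrite (Z.abs_eq m2) by lia | rewrite (Z.abs_neq m2) by lia
                 | rewrite (Z.abs_eq y1) by lia | rewrite (Z.abs_neq y1) by lia
                 | rewrite (Z.abs_eq y2) by lia | rewrite (Z.abs_neq y2) by lia]; ring. }
  rewrite HP in G.
  assert (ED : m1 * y2 - m2 * y1 = 2 * c * (m1*n2 - n1*m2)) by (unfold y1, y2; ring).
  rewrite ED in G.
  set (Dt := m1*n2 - n1*m2) in *.
  assert (G2 : (4*c*c) * (100 * Dt * Dt * qdisc a b c) < (4*c*c) * (484 * k * k)).
  { replace ((4*c*c) * (100 * Dt * Dt * qdisc a b c)) with (100 * (2 * c * Dt * (2 * c * Dt)) * qdisc a b c) by ring.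
    replace ((4*c*c) * (484 * k * k)) with (121 * (4 * c * k * (4 * c * k))) by ring. exact G. }
  assert (Hcc : 0 < 4*c*c).
  { assert (0 < c*c) by (destruct (Z_lt_le_dec 0 c); [apply Z.mul_pos_pos|apply Z.mul_neg_neg]; lia). lia. }
  apply Z.mul_lt_mono_pos_l in G2; [|exact Hcc].
  assert (G4 : 5 * (Dt*Dt) <= qdisc a b c * (Dt*Dt)).
  { apply Z.mul_le_mono_nonneg_r; [apply Z.square_nonneg | exact HD]. }
  assert (G3 : Dt * Dt < k * k).
  { replace (100 * Dt * Dt * qdisc a b c) with (100 * (qdisc a b c * (Dt*Dt))) in G2 by ring.
    replace (484 * k * k) with (484 * (k*k)) in G2 by ring.
    set (X := Dt*Dt) in *. set (Q := qdisc a b c * X) in *. set (KK := k*k) in *.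
    assert (0 <= X) by apply Z.square_nonneg. assert (0 <= KK) by apply Z.square_nonneg.
    clearbody X Q KK. lia. }
  rewrite <- (Z.abs_square Dt), <- (Z.abs_square k) in G3.
  destruct (Z_lt_le_dec (Z.abs Dt) (Z.abs k)) as [h|h]; [exact h|].
  assert (Z.abs k * Z.abs k <= Z.abs Dt * Z.abs Dt) by (apply Z.mul_le_mono_nonneg; lia). lia.
Qed.

Open Scope Z_scope.

Lemma betaD_gen (a b c k' m1 n1 x1 y1 m2 n2 x2 y2 t1 t2 t3 : Z) :
  m1*y1 - n1*x1 = 1 -> m2*y2 - n2*x2 = 1 ->
  qform a b c m1 n1 = k' -> qform a b c m2 n2 = k' ->
  (2*k' | Bf a b c m2 n2 x2 y2 - Bf a b c m1 n1 x1 y1) ->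
  t1*a + t2*b + t3*c = 1 -> (k' | m1*n2 - n1*m2).
Proof.
  intros d1 d2 Hq1 Hq2 Hb Ht.
  assert (e1 : (m2*y1 - n2*x1)*m1 + (m1*n2 - n1*m2)*x1 = m2).
  { transitivity (m2*(m1*y1 - n1*x1)); [ring | rewrite d1; ring]. }
  assert (e2 : (m2*y1 - n2*x1)*n1 + (m1*n2 - n1*m2)*y1 = n2).
  { transitivity (n2*(m1*y1 - n1*x1)); [ring | rewrite d1; ring]. }
  assert (e3 : (x2*y1 - y2*x1)*m1 + (m1*y2 - n1*x2)*x1 = x2).
  { transitivity (x2*(m1*y1 - n1*x1)); [ring | rewrite d1; ring]. }
  assert (e4 : (x2*y1 - y2*x1)*n1 + (m1*y2 - n1*x2)*y1 = y2).
  { transitivity (y2*(m1*y1 - n1*x1)); [ring | rewrite d1; ring]. }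
  assert (eXY : (m2*y1 - n2*x1)*(m1*y2 - n1*x2) - (x2*y1 - y2*x1)*(m1*n2 - n1*m2) = 1).
  { transitivity ((m2*y2 - n2*x2)*(m1*y1 - n1*x1)); [ring | rewrite d1, d2; ring]. }
  apply (core_div a b c k' m1 n1 x1 y1 (m2*y1 - n2*x1) (m1*n2 - n1*m2)
           (x2*y1 - y2*x1) (m1*y2 - n1*x2) t1 t2 t3); try assumption;
  rewrite ?e1, ?e2, ?e3, ?e4; assumption.
Qed.

Definition bez (m n : Z) : Z * Z :=
  epsilon (inhabits (0,0)) (fun p : Z * Z => fst p * m + snd p * n = 1).

Lemma bez_spec (m n : Z) : Z.gcd m n = 1 -> fst (bez m n) * m + snd (bez m n) * n = 1.
Proof.
  intro H. unfold bez. apply epsilon_spec.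
  apply Zgcd_1_rel_prime in H. apply rel_prime_bezout in H.
  destruct H as [u v Huv]. exists (u, v). exact Huv.
Qed.

Definition beta (a b c m n : Z) : Z :=
  Bf a b c m n (- snd (bez m n)) (fst (bez m n)).

Lemma beta_det (m n : Z) : Z.gcd m n = 1 -> m * fst (bez m n) - n * (- snd (bez m n)) = 1.
Proof. intro H. pose proof (bez_spec m n H). lia. Qed.

Lemma beta_disc (a b c m n : Z) : Z.gcd m n = 1 ->
  beta a b c m n * beta a b c m n - 4 * qform a b c m n * qform a b c (- snd (bez m n)) (fst (bez m n))
  = qdisc a b c.
Proof.
  intro H. pose proof (beta_det m n H) as D. unfold beta.
  set (x := - snd (bez m n)) in *. set (y := fst (bez m n)) in *. clearbody x y.
  transitivity (qdisc a b c * ((m*y - n*x)*(m*y - n*x))).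
  - unfold Bf, qform, qdisc. ring.
  - rewrite D. ring.
Qed.

Lemma betaD (a b c k' m1 n1 m2 n2 t1 t2 t3 : Z) :
  Z.gcd m1 n1 = 1 -> Z.gcd m2 n2 = 1 ->
  qform a b c m1 n1 = k' -> qform a b c m2 n2 = k' ->
  (2*k' | beta a b c m2 n2 - beta a b c m1 n1) ->
  t1*a + t2*b + t3*c = 1 -> (k' | m1*n2 - n1*m2).
Proof.
  intros G1 G2 Hq1 Hq2 Hb Ht.
  apply (betaD_gen a b c k' m1 n1 (- snd (bez m1 n1)) (fst (bez m1 n1))
                   m2 n2 (- snd (bez m2 n2)) (fst (bez m2 n2)) t1 t2 t3); try assumption;
  apply beta_det; assumption.
Qed.

Open Scope Z_scope.

Lemma prim_par (m1 n1 m2 n2 : Z) : Z.gcd m1 n1 = 1 -> Z.gcd m2 n2 = 1 -> m1 <> 0 -> m2 <> 0 ->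
  (0 <? m1) = (0 <? m2) -> m1*n2 - n1*m2 = 0 -> m1 = m2 /\ n1 = n2.
Proof.
  intros G1 G2 H1 H2 S E.
  assert (D1 : (m1 | m2)).
  { apply Z.gauss with (m := n1); [exists n2; lia | exact G1]. }
  assert (D2 : (m2 | m1)).
  { apply Z.gauss with (m := n2); [exists n1; lia | exact G2]. }
  pose proof (Z.divide_antisym_abs _ _ D1 D2) as A.
  assert (Em : m1 = m2).
  { destruct (Z.ltb_spec 0 m1); destruct (Z.ltb_spec 0 m2); try discriminate; lia. }
  split; [exact Em|]. subst m2.
  apply Z.mul_reg_l with m1; [exact H1|]. lia.
Qed.

Definition zrange (N : Z) : list Z := map Z.of_nat (seq 0 (Z.to_nat N)).

Lemma in_zrange (x N : Z) : In x (zrange N) <-> 0 <= x < N.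
Proof.
  unfold zrange. rewrite in_map_iff. split.
  - intros [n [<- Hn]]. apply in_seq in Hn. lia.
  - intros H. exists (Z.to_nat x). split; [lia|]. apply in_seq. lia.
Qed.

Lemma length_zrange (N : Z) : length (zrange N) = Z.to_nat N.
Proof. unfold zrange. rewrite length_map, length_seq. reflexivity. Qed.

Definition isroot (D N x : Z) : bool := Z.eqb ((x*x - D) mod N) 0.
Definition firstroot (D N : Z) : Z := hd 0 (filter (isroot D N) (zrange N)).

Lemma firstroot_spec (D N x : Z) : 0 < N -> 0 <= x < N -> (N | x*x - D) ->
  (N | firstroot D N * firstroot D N - D).
Proof.
  intros HN Hx Hd. unfold firstroot.
  assert (Hin : In x (filter (isroot D N) (zrange N))).
  { apply filter_In. split; [apply in_zrange; exact Hx|].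
    unfold isroot. apply Z.eqb_eq. apply Z.mod_divide; [lia|exact Hd]. }
  destruct (filter (isroot D N) (zrange N)) as [|y l] eqn:E; [destruct Hin|].
  simpl. assert (Hy : In y (filter (isroot D N) (zrange N))) by (rewrite E; left; reflexivity).
  apply filter_In in Hy. destruct Hy as [_ Hy]. unfold isroot in Hy.
  apply Z.eqb_eq in Hy. apply Z.mod_divide; [lia|exact Hy].
Qed.

Lemma small_same (D K k M1 M2 Y1 Y2 : Z) : 1 <= D -> K <> 0 -> 4 * Z.abs k <= Z.abs K -> 0 < Z.abs k ->
  0 < M1 -> 0 < M2 -> 0 <= Y1 -> 0 <= Y2 ->
  Y1*Y1 - D*M1*M1 = K -> Y2*Y2 - D*M2*M2 = K ->
  D*D*(M1*M1*(M1*M1)) < Z.abs k -> D*D*(M2*M2*(M2*M2)) < Z.abs k -> M1 <= M2 -> M1 = M2.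
Proof.
  intros HD HK Hkk Hk H1 H2 HY1 HY2 E1 E2 S1 S2 Hle.
  destruct (Z.eq_dec M1 M2) as [e|ne]; [exact e|exfalso].
  assert (Hlt : M1 < M2) by lia.
  assert (Hsq : M1*M1 < M2*M2) by nia.
  destruct (Z_lt_le_dec 0 K) as [Kp|Kn].
  - assert (Hy : Y1 < Y2).
    { destruct (Z_lt_le_dec Y1 Y2) as [h|h]; [exact h|].
      assert (Y2*Y2 <= Y1*Y1) by nia.
      assert (D*(M1*M1) < D*(M2*M2)) by (apply Z.mul_lt_mono_pos_l; lia). nia. }
    set (W := Y2*Y2 - Y1*Y1).
    assert (HW : W = D*(M2*M2 - M1*M1)) by (unfold W; nia).
    assert (HW1 : 2*Y1 + 1 <= W) by (unfold W; nia).
    assert (HY1K : K <= Y1*Y1) by nia.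
    assert (HWW : 4*K <= W*W) by nia.
    assert (Hdd : M2*M2 - M1*M1 <= M2*M2) by nia.
    assert (Hdp : 0 <= M2*M2 - M1*M1) by nia.
    assert (HW2 : W*W <= D*D*(M2*M2*(M2*M2))).
    { rewrite HW. set (u := M2*M2 - M1*M1) in *. set (v := M2*M2) in *.
      assert (u*u <= v*v) by nia. nia. }
    lia.
  - assert (Kn' : K < 0) by lia.
    assert (D*(M2*M2) >= - K) by nia.
    assert (D*(M2*M2) >= 4 * Z.abs k) by lia.
    assert (D*(M2*M2)*(D*(M2*M2)) >= 16 * Z.abs k * Z.abs k) by nia.
    nia.
Qed.

Open Scope Z_scope.

Lemma yid (a b c k m n : Z) : qform a b c m n = k ->
  Z.abs (2*c*n + b*m) * Z.abs (2*c*n + b*m) - qdisc a b c * Z.abs m * Z.abs m = 4*c*k.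
Proof.
  intro H. rewrite <- (Z.mul_assoc (qdisc a b c) (Z.abs m) (Z.abs m)), !Z.abs_square.
  unfold qdisc. rewrite <- H. unfold qform. ring.
Qed.

Lemma y_same (m1 m2 y1 y2 : Z) : (0 <=? y1) = (0 <=? y2) -> y1*y1 = y2*y2 -> y1 = y2.
Proof.
  intros S E.
  assert (F : (y1 - y2) * (y1 + y2) = 0) by nia.
  apply Z.mul_eq_0 in F. destruct F as [F|F]; [lia|].
  destruct (Z.leb_spec 0 y1); destruct (Z.leb_spec 0 y2); try discriminate; lia.
Qed.

Lemma n_same (b c m n1 n2 : Z) : c <> 0 -> 2*c*n1 + b*m = 2*c*n2 + b*m -> n1 = n2.
Proof. intros Hc E. apply Z.mul_reg_l with (2*c); [lia|]. lia. Qed.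

Definition key2 (b c : Z) (p : Z*Z) : bool * bool :=
  (0 <? fst p, 0 <=? 2*c*snd p + b*fst p).

Lemma abs4 (c k : Z) : c <> 0 -> 4 * Z.abs k <= Z.abs (4*c*k).
Proof. intro Hc. rewrite !Z.abs_mul. simpl (Z.abs 4). nia. Qed.

Lemma small_count (a b c k : Z) : 5 <= qdisc a b c -> c <> 0 -> k <> 0 ->
  forall L, NoDup L ->
  (forall p, In p L -> A_set a b c k p /\
      qdisc a b c * qdisc a b c * (fst p * fst p * (fst p * fst p)) < Z.abs k) ->
  (length L <= 4)%nat.
Proof.
  intros HD Hc Hk L ND HL.
  assert (HK4 : 4*c*k <> 0) by (intro h; apply Z.mul_eq_0 in h; destruct h as [h|h]; [apply Z.mul_eq_0 in h|]; lia).
  rewrite <- (length_map (key2 b c)).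
  change 4%nat with (length [(true,true);(true,false);(false,true);(false,false)]).
  apply NoDup_incl_length.
  - apply NoDup_map_NoDup_ForallPairs; [|exact ND].
    intros [m1 n1] [m2 n2] I1 I2 E. unfold key2 in E; simpl in E. injection E as Sm Sy.
    destruct (HL _ I1) as [[Hm1 Hq1] S1]. destruct (HL _ I2) as [[Hm2 Hq2] S2].
    simpl in *.
    pose proof (yid a b c k m1 n1 Hq1) as Y1. pose proof (yid a b c k m2 n2 Hq2) as Y2.
    rewrite <- (Z.abs_square m1) in S1. rewrite <- (Z.abs_square m2) in S2.
    assert (Ha : Z.abs m1 = Z.abs m2).
    { destruct (Z.le_ge_cases (Z.abs m1) (Z.abs m2)) as [h|h].
      - apply (small_same (qdisc a b c) (4*c*k) k _ _ (Z.abs (2*c*n1 + b*m1)) (Z.abs (2*c*n2 + b*m2)));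
          try lia; try apply abs4; try assumption.
      - symmetry.
        apply (small_same (qdisc a b c) (4*c*k) k _ _ (Z.abs (2*c*n2 + b*m2)) (Z.abs (2*c*n1 + b*m1)));
          try lia; try apply abs4; try assumption. }
    assert (Em : m1 = m2).
    { destruct (Z.ltb_spec 0 m1); destruct (Z.ltb_spec 0 m2); try discriminate; lia. }
    subst m2.
    assert (Ey : 2*c*n1 + b*m1 = 2*c*n2 + b*m1).
    { apply y_same; [exact m1 | exact m1 | exact Sy |].
      rewrite <- (Z.abs_square (2*c*n1+b*m1)), <- (Z.abs_square (2*c*n2+b*m1)). lia. }
    f_equal. apply (n_same b c m1); assumption.
  - intros [[|] [|]] _; simpl; tauto.
Qed.

Open Scope Z_scope.

Lemma sol_decomp (a b c k m n : Z) : m <> 0 -> qform a b c m n = k -> k <> 0 ->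
  let g := Z.gcd m n in
  0 < g /\ m = g * (m / g) /\ n = g * (n / g) /\ Z.gcd (m / g) (n / g) = 1 /\
  k = g * g * qform a b c (m / g) (n / g) /\ qform a b c (m / g) (n / g) <> 0.
Proof.
  intros Hm Hq Hk g.
  assert (Hg0 : 0 <= g) by apply Z.gcd_nonneg.
  assert (Hgn : g <> 0) by (intro E; apply Z.gcd_eq_0_l in E; lia).
  assert (Em : m = g * (m / g)) by (apply divex; [exact Hgn | apply Z.gcd_divide_l]).
  assert (En : n = g * (n / g)) by (apply divex; [exact Hgn | apply Z.gcd_divide_r]).
  assert (Ek : k = g * g * qform a b c (m / g) (n / g)).
  { rewrite <- Hq. rewrite Em at 1. rewrite En at 1. unfold qform. ring. }
  split; [lia|]. split; [exact Em|]. split; [exact En|].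
  split; [apply Z.gcd_div_gcd; auto|]. split; [exact Ek|].
  intro E. rewrite E in Ek. lia.
Qed.

Lemma root_facts (a b c m n : Z) : Z.gcd m n = 1 -> qform a b c m n <> 0 ->
  let k' := qform a b c m n in let r := beta a b c m n mod (2 * Z.abs k') in
  0 < 4 * Z.abs k' /\ 0 <= r < 4 * Z.abs k' /\ (4 * Z.abs k' | r * r - qdisc a b c) /\
  (2 * Z.abs k' | beta a b c m n - r).
Proof.
  intros G Hk k' r.
  pose proof (beta_disc a b c m n G) as BD. fold k' in BD.
  set (be := beta a b c m n) in *. set (c' := qform a b c (- snd (bez m n)) (fst (bez m n))) in *.
  clearbody be c'.
  assert (Ha : 0 < Z.abs k') by lia.
  assert (Hr : 0 <= r < 2 * Z.abs k') by (apply Z.mod_pos_bound; lia).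
  assert (Er : be = 2 * Z.abs k' * (be / (2 * Z.abs k')) + r) by (apply Z.div_mod; lia).
  set (q := be / (2 * Z.abs k')) in *. clearbody q r.
  split; [lia|]. split; [lia|]. split.
  - destruct (Z_le_gt_dec 0 k') as [h|h].
    + rewrite (Z.abs_eq k') in * by lia.
      exists (c' - q*be + k'*q*q). nia.
    + rewrite (Z.abs_neq k') in * by lia.
      exists (-c' - q*be - k'*q*q). nia.
  - exists q. lia.
Qed.

Definition key (a b c : Z) (p : Z*Z) : bool * bool * Z * (Z * Z) :=
  let m := fst p in let n := snd p in let g := Z.gcd m n in
  let m' := m / g in let n' := n / g in let k' := qform a b c m' n' in
  let N := 4 * Z.abs k' in
  (0 <? m, 0 <=? 2*c*n + b*m, g,
   rk N (firstroot (qdisc a b c) N) (beta a b c m' n' mod (2 * Z.abs k'))).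

Definition keylist (Dk D4k : list Z) (B : Z) : list (bool * bool * Z * (Z * Z)) :=
  list_prod (list_prod (list_prod [true;false] [true;false]) Dk) (list_prod D4k (zrange B)).

Lemma length_keylist Dk D4k B :
  length (keylist Dk D4k B) = (4 * length Dk * (length D4k * Z.to_nat B))%nat.
Proof. unfold keylist. rewrite !length_prod, length_zrange. simpl. lia. Qed.

Lemma divk_small (Y k : Z) : (k | Y) -> Z.abs Y < Z.abs k -> Y = 0.
Proof.
  intros [z ->] H. rewrite Z.abs_mul in H.
  assert (Z.abs z = 0) by nia. lia.
Qed.

Lemma sign_mul (g x : Z) : 0 < g -> (0 <? g * x) = (0 <? x).
Proof.
  intro Hg. destruct (Z.ltb_spec 0 x) as [h|h].
  - apply Z.ltb_lt. apply Z.mul_pos_pos; lia.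
  - apply Z.ltb_ge. apply Z.mul_nonneg_nonpos; lia.
Qed.

Lemma key_inj (a b c k t1 t2 t3 m1 n1 m2 n2 : Z) :
  t1*a + t2*b + t3*c = 1 -> 5 <= qdisc a b c -> c <> 0 -> k <> 0 ->
  m1 <> 0 -> qform a b c m1 n1 = k -> m2 <> 0 -> qform a b c m2 n2 = k ->
  10 * Z.abs m1 < 11 * Z.abs m2 -> 10 * Z.abs m2 < 11 * Z.abs m1 ->
  key a b c (m1, n1) = key a b c (m2, n2) -> m1 = m2 /\ n1 = n2.
Proof.
  intros Ht HD Hc Hk Hm1 Hq1 Hm2 Hq2 R1 R2 E.
  unfold key in E. cbv beta zeta iota delta [fst snd] in E.
  assert (Erk := f_equal snd E). assert (Eg := f_equal (fun x => snd (fst x)) E).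
  assert (Sy := f_equal (fun x => snd (fst (fst x))) E).
  assert (Sm := f_equal (fun x => fst (fst (fst x))) E).
  cbv beta iota delta [fst snd] in Erk, Eg, Sy, Sm. clear E.
  pose proof (sol_decomp a b c k m1 n1 Hm1 Hq1 Hk) as F1.
  pose proof (sol_decomp a b c k m2 n2 Hm2 Hq2 Hk) as F2. cbv zeta in F1, F2.
  rewrite <- Eg in F2, Erk.
  set (g := Z.gcd m1 n1) in *.
  destruct F1 as (Hg & Em1 & En1 & G1 & Ek1 & Hk1).
  destruct F2 as (_ & Em2 & En2 & G2 & Ek2 & Hk2).
  set (m1' := m1 / g) in *. set (n1' := n1 / g) in *.
  set (m2' := m2 / g) in *. set (n2' := n2 / g) in *.
  assert (Ek : qform a b c m1' n1' = qform a b c m2' n2').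
  { apply Z.mul_reg_l with (g*g); [apply Z.neq_mul_0; lia|]. rewrite <- Ek1; exact Ek2. }
  rewrite <- Ek in Erk.
  set (k' := qform a b c m1' n1') in *.
  pose proof (root_facts a b c m1' n1' G1 Hk1) as R1'. cbv zeta in R1'. fold k' in R1'.
  pose proof (root_facts a b c m2' n2' G2 Hk2) as R2'. cbv zeta in R2'. rewrite <- Ek in R2'. fold k' in R2'.
  destruct R1' as (HN & Hr1 & Hd1 & Hb1). destruct R2' as (_ & Hr2 & Hd2 & Hb2).
  set (r1 := beta a b c m1' n1' mod (2 * Z.abs k')) in *.
  set (r2 := beta a b c m2' n2' mod (2 * Z.abs k')) in *.
  pose proof (firstroot_spec (qdisc a b c) (4 * Z.abs k') r1 HN Hr1 Hd1) as Hx0.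
  assert (Er : r1 = r2). { apply (rk_inj (qdisc a b c) (4 * Z.abs k') (firstroot (qdisc a b c) (4 * Z.abs k')) r1 r2 HN Hr1 Hr2 Hx0 Hd1 Hd2 Erk). }
  assert (Hbd : (2 * k' | beta a b c m2' n2' - beta a b c m1' n1')).
  { apply Z.divide_abs_l. rewrite Z.abs_mul. simpl (Z.abs 2).
    destruct Hb1 as [u1 Hu1]. destruct Hb2 as [u2 Hu2].
    exists (u2 - u1). rewrite <- Er in Hu2. lia. }
  assert (HY : (k' | m1'*n2' - n1'*m2')).
  { apply (betaD a b c k' m1' n1' m2' n2' t1 t2 t3); auto. }
  assert (Hsm : (0 <? m1) = (0 <? m2)) by exact Sm.
  pose proof (det_small a b c k m1 n1 m2 n2 HD Hc Hk Hq1 Hq2 Hm1 Hm2 Sm Sy R1 R2) as DS.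
  assert (ED : m1*n2 - n1*m2 = g*g*(m1'*n2' - n1'*m2')).
  { rewrite Em1 at 1. rewrite En2 at 1. rewrite En1 at 1. rewrite Em2 at 1. ring. }
  rewrite ED in DS. rewrite Ek1 in DS. rewrite !Z.abs_mul in DS.
  assert (Hsm' : Z.abs (m1'*n2' - n1'*m2') < Z.abs k').
  { apply (Z.mul_lt_mono_pos_l (Z.abs g * Z.abs g)); [apply Z.mul_pos_pos; lia | exact DS]. }
  pose proof (divk_small _ _ HY Hsm') as Y0.
  assert (S' : (0 <? m1') = (0 <? m2')).
  { rewrite <- (sign_mul g m1' Hg), <- (sign_mul g m2' Hg), <- Em1, <- Em2. exact Sm. }
  assert (Hm1' : m1' <> 0) by (intro h; rewrite h, Z.mul_0_r in Em1; lia).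
  assert (Hm2' : m2' <> 0) by (intro h; rewrite h, Z.mul_0_r in Em2; lia).
  destruct (prim_par m1' n1' m2' n2' G1 G2 Hm1' Hm2' S' Y0) as [A B].
  clearbody m1' n1' m2' n2'. split; [rewrite Em1, Em2, A | rewrite En1, En2, B]; reflexivity.
Qed.

Lemma key_in (a b c k m n : Z) (Dk D4k : list Z) :
  0 < qdisc a b c -> k <> 0 -> m <> 0 -> qform a b c m n = k ->
  (forall g, 0 < g -> (g | k) -> In g Dk) -> (forall g, 0 < g -> (g | 4*k) -> In g D4k) ->
  In (key a b c (m, n)) (keylist Dk D4k (Z.sqrt (4 * qdisc a b c))).
Proof.
  intros HD Hk Hm Hq HDk HD4k.
  pose proof (sol_decomp a b c k m n Hm Hq Hk) as F. cbv zeta in F.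
  destruct F as (Hg & Em & En & G & Ek & Hk').
  pose proof (root_facts a b c (m / Z.gcd m n) (n / Z.gcd m n) G Hk') as R. cbv zeta in R.
  destruct R as (HN & Hr & Hd & Hb).
  pose proof (firstroot_spec _ _ _ HN Hr Hd) as Hx0.
  pose proof (rk_bound _ _ _ _ HN HD Hx0 Hd) as RB.
  unfold key, keylist. cbv beta zeta iota delta [fst snd].
  set (RK := rk _ _ _) in *. destruct RK as [g' i] eqn:ERK. simpl in RB.
  destruct RB as (Hg' & Hg'N & Hi).
  apply in_prod; [apply in_prod; [apply in_prod|]|apply in_prod].
  - destruct (0 <? m); simpl; tauto.
  - destruct (0 <=? 2*c*n + b*m); simpl; tauto.
  - apply HDk; [exact Hg|]. exists (Z.gcd m n * qform a b c (m / Z.gcd m n) (n / Z.gcd m n)).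
    rewrite Ek at 1. ring.
  - apply HD4k; [exact Hg'|]. apply Z.divide_trans with (4 * Z.abs (qform a b c (m / Z.gcd m n) (n / Z.gcd m n))); [exact Hg'N|].
    replace (4 * Z.abs (qform a b c (m / Z.gcd m n) (n / Z.gcd m n))) with (Z.abs (4 * qform a b c (m / Z.gcd m n) (n / Z.gcd m n)))
      by (rewrite Z.abs_mul; reflexivity).
    apply Z.divide_abs_l. exists (Z.gcd m n * Z.gcd m n). rewrite Ek at 1. ring.
  - apply in_zrange. exact Hi.
Qed.

Lemma range_count (a b c k t1 t2 t3 : Z) (Dk D4k : list Z) (R : R) :
  t1*a + t2*b + t3*c = 1 -> 5 <= qdisc a b c -> c <> 0 -> k <> 0 ->
  (forall g, 0 < g -> (g | k) -> In g Dk) -> (forall g, 0 < g -> (g | 4*k) -> In g D4k) ->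
  (0 < R)%R -> forall L, NoDup L ->
  (forall p, In p L -> A_set a b c k p /\ (R <= IZR (Z.abs (fst p)) < 11/10 * R)%R) ->
  (length L <= length (keylist Dk D4k (Z.sqrt (4 * qdisc a b c))))%nat.
Proof.
  intros Ht HD Hc Hk HDk HD4k HR L ND HL.
  rewrite <- (length_map (key a b c)).
  apply NoDup_incl_length.
  - apply NoDup_map_NoDup_ForallPairs; [|exact ND].
    intros [m1 n1] [m2 n2] I1 I2 E.
    destruct (HL _ I1) as [[Hm1 Hq1] [Ra1 Rb1]]. destruct (HL _ I2) as [[Hm2 Hq2] [Ra2 Rb2]].
    simpl in *.
    assert (R1 : 10 * Z.abs m1 < 11 * Z.abs m2).
    { apply lt_IZR. rewrite !mult_IZR. lra. }
    assert (R2 : 10 * Z.abs m2 < 11 * Z.abs m1).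
    { apply lt_IZR. rewrite !mult_IZR. lra. }
    destruct (key_inj a b c k t1 t2 t3 m1 n1 m2 n2 Ht HD Hc Hk Hm1 Hq1 Hm2 Hq2 R1 R2 E) as [-> ->].
    reflexivity.
  - intros x Hx. apply in_map_iff in Hx. destruct Hx as [[m n] [<- Hin]].
    destruct (HL _ Hin) as [[Hm Hq] _]. simpl in *.
    apply (key_in a b c k); try assumption. lia.
Qed.

Open Scope R_scope.

Lemma list_sum_app f l1 l2 : Defs.list_sum f (l1 ++ l2) = Defs.list_sum f l1 + Defs.list_sum f l2.
Proof. induction l1 as [|x l IH]; simpl; [lra | rewrite IH; lra]. Qed.

Lemma list_sum_filter f (P : Z*Z -> bool) L :
  Defs.list_sum f L = Defs.list_sum f (filter P L) + Defs.list_sum f (filter (fun x => negb (P x)) L).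
Proof.
  induction L as [|x l IH]; simpl; [lra|].
  destruct (P x); simpl; rewrite IH; lra.
Qed.

Lemma list_sum_nonneg f L : (forall p, In p L -> 0 <= f p) -> 0 <= Defs.list_sum f L.
Proof.
  induction L as [|x l IH]; simpl; intros H; [lra|].
  assert (0 <= f x) by (apply H; left; reflexivity).
  assert (0 <= Defs.list_sum f l) by (apply IH; intros; apply H; right; assumption). lra.
Qed.

Lemma list_sum_le_len f L B : (forall p, In p L -> f p <= B) -> Defs.list_sum f L <= INR (length L) * B.
Proof.
  induction L as [|x l IH]; intros H; [simpl; lra|].
  change (length (x::l)) with (S (length l)). rewrite S_INR. simpl Defs.list_sum.
  assert (f x <= B) by (apply H; left; reflexivity).
  assert (Defs.list_sum f l <= INR (length l) * B) by (apply IH; intros; apply H; right; assumption).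
  lra.
Qed.

Lemma list_sum_le f g L : (forall p, In p L -> f p <= g p) -> Defs.list_sum f L <= Defs.list_sum g L.
Proof.
  induction L as [|x l IH]; simpl; intros H; [lra|].
  assert (f x <= g x) by (apply H; left; reflexivity).
  assert (Defs.list_sum f l <= Defs.list_sum g l) by (apply IH; intros; apply H; right; assumption). lra.
Qed.

Lemma Rpower_pos x y : 0 < Rpower x y.
Proof. unfold Rpower. apply exp_pos. Qed.

Lemma Rpower_gt1 x y : 1 < x -> 0 < y -> 1 < Rpower x y.
Proof.
  intros Hx Hy. unfold Rpower. rewrite <- exp_0. apply exp_increasing.
  assert (0 < ln x) by (rewrite <- ln_1; apply ln_increasing; lra). nra.
Qed.

Lemma Rpower_ge1 x y : 1 <= x -> 0 <= y -> 1 <= Rpower x y.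
Proof.
  intros Hx Hy. unfold Rpower. rewrite <- exp_0.
  destruct (Rle_lt_or_eq_dec _ _ Hx) as [h|h].
  - assert (0 < ln x) by (rewrite <- ln_1; apply ln_increasing; lra).
    destruct (Rle_lt_or_eq_dec _ _ Hy) as [h2|h2].
    + left. apply exp_increasing. nra.
    + rewrite <- h2, Rmult_0_l. lra.
  - rewrite <- h, ln_1, Rmult_0_r. lra.
Qed.

Lemma Rpower_pow_l x y (M : nat) : 0 < x -> Rpower (x ^ M) y = Rpower x y ^ M.
Proof.
  intros Hx. rewrite <- (Rpower_pow M x Hx), Rpower_mult.
  rewrite <- Rpower_pow by apply Rpower_pos. rewrite Rpower_mult. f_equal. ring.
Qed.

Lemma exists_bound (L : list (Z*Z)) (X0 rho : R) : 0 < X0 -> 1 < rho ->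
  exists M : nat, forall p, In p L -> IZR (Z.abs (fst p)) < X0 * rho ^ M.
Proof.
  intros HX Hr. induction L as [|x l IH].
  - exists 0%nat. intros p [].
  - destruct IH as [M1 HM1].
    destruct (Pow_x_infinity rho ltac:(rewrite Rabs_right; lra) (IZR (Z.abs (fst x)) / X0 + 1)) as [M2 HM2].
    exists (Nat.max M1 M2). intros p [<-|Hp].
    + specialize (HM2 (Nat.max M1 M2) ltac:(lia)).
      rewrite Rabs_right in HM2 by (apply Rle_ge, pow_le; lra).
      assert (IZR (Z.abs (fst x)) / X0 < rho ^ Nat.max M1 M2) by lra.
      apply (Rmult_lt_compat_l X0) in H; [|lra].
      replace (X0 * (IZR (Z.abs (fst x)) / X0)) with (IZR (Z.abs (fst x))) in H by (field; lra).
      exact H.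
    + apply Rlt_le_trans with (X0 * rho ^ M1); [apply HM1; exact Hp|].
      apply Rmult_le_compat_l; [lra|]. apply Rle_pow; [lra|lia].
Qed.

Lemma sum_ranges (P : Z*Z -> Prop) (lam X0 : R) (N : nat) : 0 < lam -> 0 < X0 ->
  (forall R, X0 <= R -> forall L', NoDup L' ->
     (forall p, In p L' -> P p /\ R <= IZR (Z.abs (fst p)) < 11/10 * R) -> (length L' <= N)%nat) ->
  forall L, NoDup L -> (forall p, In p L -> P p /\ X0 <= IZR (Z.abs (fst p))) ->
  Defs.list_sum (fun p => / Rpower (IZR (Z.abs (fst p))) lam) L
    <= INR N * / Rpower X0 lam * / (1 - / Rpower (11/10) lam).
Proof.
  intros Hl HX HC L ND HL.
  set (f := fun p : Z*Z => / Rpower (IZR (Z.abs (fst p))) lam).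
  set (rho := 11/10). set (r := / Rpower rho lam). set (A := / Rpower X0 lam).
  assert (Hrho : 1 < Rpower rho lam) by (apply Rpower_gt1; unfold rho; lra).
  assert (Hr0 : 0 < r) by (apply Rinv_0_lt_compat; lra).
  assert (Hr1 : r < 1).
  { unfold r. rewrite <- Rinv_1. apply Rinv_lt_contravar; lra. }
  assert (HA : 0 < A) by (apply Rinv_0_lt_compat, Rpower_pos).
  assert (HN : 0 <= INR N) by apply pos_INR.
  assert (Claim : forall M L, NoDup L ->
            (forall p, In p L -> P p /\ X0 <= IZR (Z.abs (fst p)) < X0 * rho ^ M) ->
            Defs.list_sum f L <= INR N * A * ((1 - r ^ M) / (1 - r))).
  { induction M as [|M IH]; intros L0 ND0 HL0.
    - destruct L0 as [|x l].
      + simpl. unfold Rdiv. rewrite Rminus_diag, Rmult_0_l, Rmult_0_r. lra.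
      + destruct (HL0 x (or_introl eq_refl)) as [_ [h1 h2]]. simpl in h2. lra.
    - set (bp := fun p : Z*Z => if Rlt_dec (IZR (Z.abs (fst p))) (X0 * rho ^ M) then true else false).
      rewrite (list_sum_filter f bp L0).
      assert (Low : Defs.list_sum f (filter bp L0) <= INR N * A * ((1 - r ^ M) / (1 - r))).
      { apply IH; [apply NoDup_filter; exact ND0|].
        intros p Hp. apply filter_In in Hp. destruct Hp as [Hp Hb].
        destruct (HL0 p Hp) as [HP [h1 h2]]. unfold bp in Hb.
        destruct (Rlt_dec _ _) as [h|h]; [|discriminate]. auto. }
      assert (HRM : X0 <= X0 * rho ^ M).
      { rewrite <- (Rmult_1_r X0) at 1. apply Rmult_le_compat_l; [lra|].
        apply pow_R1_Rle. unfold rho; lra. }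
      assert (Hi : (length (filter (fun x => negb (bp x)) L0) <= N)%nat).
      { apply (HC (X0 * rho ^ M) HRM); [apply NoDup_filter; exact ND0|].
        intros p Hp. apply filter_In in Hp. destruct Hp as [Hp Hb].
        destruct (HL0 p Hp) as [HP [h1 h2]]. unfold bp in Hb.
        destruct (Rlt_dec _ _) as [h|h]; [discriminate|].
        split; [exact HP|]. split; [lra|]. simpl in h2. unfold rho in *. lra. }
      assert (High : Defs.list_sum f (filter (fun x => negb (bp x)) L0) <= INR N * (A * r ^ M)).
      { apply Rle_trans with (INR (length (filter (fun x => negb (bp x)) L0)) * (A * r ^ M)).
        - apply list_sum_le_len. intros p Hp. apply filter_In in Hp. destruct Hp as [Hp Hb].
          destruct (HL0 p Hp) as [HP [h1 h2]]. unfold bp in Hb.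
          destruct (Rlt_dec _ _) as [h|h]; [discriminate|].
          assert (E : A * r ^ M = / Rpower (X0 * rho ^ M) lam).
          { unfold A, r. rewrite <- Rpower_mult_distr by (try apply pow_lt; unfold rho; lra).
            rewrite Rpower_pow_l by (unfold rho; lra). rewrite pow_inv, Rinv_mult. reflexivity. }
          rewrite E. unfold f. apply Rinv_le_contravar; [apply Rpower_pos|].
          apply Rle_Rpower_l; [lra|]. split; [|lra].
          apply Rmult_lt_0_compat; [lra|apply pow_lt; unfold rho; lra].
        - apply Rmult_le_compat_r; [apply Rmult_le_pos; [lra|apply pow_le; lra]|].
          apply le_INR. exact Hi. }
      assert (Eq : INR N * A * ((1 - r ^ M) / (1 - r)) + INR N * (A * r ^ M)
                   = INR N * A * ((1 - r ^ S M) / (1 - r))) by (simpl; field; lra).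
      lra. }
  destruct (exists_bound L X0 rho HX ltac:(unfold rho; lra)) as [M HM].
  apply Rle_trans with (INR N * A * ((1 - r ^ M) / (1 - r))).
  - apply Claim; [exact ND|]. intros p Hp. destruct (HL p Hp). auto.
  - assert (0 <= r ^ M) by (apply pow_le; lra).
    assert (0 < 1 - r) by lra.
    assert (Hq : (1 - r ^ M) / (1 - r) <= / (1 - r)).
    { unfold Rdiv. rewrite <- (Rmult_1_l (/ (1 - r))) at 2.
      apply Rmult_le_compat_r; [apply Rlt_le, Rinv_0_lt_compat; lra | lra]. }
    apply Rmult_le_compat_l; [nra|exact Hq].
Qed.

Open Scope R_scope.

Lemma Rpower_quarter (x : R) : 0 < x -> Rpower (x ^ 4) (/4) = x.
Proof.
  intro Hx. rewrite <- (Rpower_pow 4 x Hx), Rpower_mult.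
  replace (INR 4 * / 4) with 1 by (simpl; field). apply Rpower_1; exact Hx.
Qed.

Lemma core_bound (a b c k t1 t2 t3 : Z) (Dk D4k : list Z) (lam : R) :
  (t1*a + t2*b + t3*c = 1)%Z -> (5 <= qdisc a b c)%Z -> c <> 0%Z -> k <> 0%Z ->
  (forall g, (0 < g)%Z -> (g | k)%Z -> In g Dk) -> (forall g, (0 < g)%Z -> (g | 4*k)%Z -> In g D4k) ->
  0 < lam -> forall L, NoDup L -> Forall (A_set a b c k) L ->
  Defs.list_sum (fun p => / Rpower (IZR (Z.abs (fst p))) lam) L <=
    4 + INR (length (keylist Dk D4k (Z.sqrt (4 * qdisc a b c))))
        * / Rpower (Rpower (IZR (Z.abs k) / (IZR (qdisc a b c) * IZR (qdisc a b c))) (/4)) lam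
        * / (1 - / Rpower (11/10) lam).
Proof.
  intros Ht HD Hc Hk HDk HD4k Hl L ND HF.
  rewrite Forall_forall in HF.
  set (D := qdisc a b c) in *.
  set (sb := fun p : Z*Z => (D * D * (fst p * fst p * (fst p * fst p)) <? Z.abs k)%Z).
  rewrite (list_sum_filter _ sb L).
  set (X0 := Rpower (IZR (Z.abs k) / (IZR D * IZR D)) (/4)).
  assert (HX0 : 0 < X0) by apply Rpower_pos.
  assert (Small : Defs.list_sum (fun p => / Rpower (IZR (Z.abs (fst p))) lam) (filter sb L) <= 4).
  { apply Rle_trans with (INR (length (filter sb L)) * 1).
    - apply list_sum_le_len. intros p Hp. apply filter_In in Hp. destruct Hp as [Hp _].
      destruct (HF p Hp) as [Hm _].
      rewrite <- Rinv_1. apply Rinv_le_contravar; [lra|].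
      apply Rpower_ge1; [|lra]. apply IZR_le. lia.
    - rewrite Rmult_1_r. replace 4 with (INR 4) by (simpl; lra). apply le_INR.
      apply (small_count a b c k HD Hc Hk); [apply NoDup_filter; exact ND|].
      intros p Hp. apply filter_In in Hp. destruct Hp as [Hp Hb].
      split; [apply HF; exact Hp|]. apply Z.ltb_lt. exact Hb. }
  assert (Big : Defs.list_sum (fun p => / Rpower (IZR (Z.abs (fst p))) lam) (filter (fun x => negb (sb x)) L)
     <= INR (length (keylist Dk D4k (Z.sqrt (4 * D)))) * / Rpower X0 lam * / (1 - / Rpower (11/10) lam)).
  { apply (sum_ranges (A_set a b c k)); [exact Hl | exact HX0 | | apply NoDup_filter; exact ND |].
    - intros R HR L' ND' HL'. apply (range_count a b c k t1 t2 t3 Dk D4k R); auto. lra.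
    - intros p Hp. apply filter_In in Hp. destruct Hp as [Hp Hb].
      split; [apply HF; exact Hp|].
      destruct (HF p Hp) as [Hm _].
      unfold sb in Hb. apply Bool.negb_true_iff, Z.ltb_ge in Hb.
      assert (Hm' : 0 < IZR (Z.abs (fst p))) by (apply IZR_lt; lia).
      rewrite <- (Rpower_quarter (IZR (Z.abs (fst p)))) by exact Hm'.
      unfold X0. apply Rle_Rpower_l; [lra|]. split.
      + apply Rdiv_lt_0_compat; [apply IZR_lt; lia|].
        assert (0 < IZR D) by (apply IZR_lt; lia). nra.
      + assert (0 < IZR D) by (apply IZR_lt; lia).
        apply Rmult_le_reg_r with (IZR D * IZR D); [nra|].
        unfold Rdiv. rewrite Rmult_assoc, Rinv_l by nra. rewrite Rmult_1_r.
        replace (IZR (Z.abs (fst p)) ^ 4) with (IZR (Z.abs (fst p) * Z.abs (fst p) * (Z.abs (fst p) * Z.abs (fst p))))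
          by (rewrite !mult_IZR; ring).
        rewrite <- (mult_IZR D D), <- mult_IZR.
        apply IZR_le. rewrite !Z.abs_square. rewrite Z.mul_comm. exact Hb. }
  lra.
Qed.

Open Scope Z_scope.

Lemma disc_ge5 (a b c : Z) : 0 < qdisc a b c -> ~ (exists r, r * r = qdisc a b c) -> 5 <= qdisc a b c.
Proof.
  intros H N. unfold qdisc in *.
  destruct (Z_lt_le_dec (b*b - 4*a*c) 5) as [h|h]; [exfalso|exact h].
  assert (Hc : b*b - 4*a*c = 1 \/ b*b - 4*a*c = 2 \/ b*b - 4*a*c = 3 \/ b*b - 4*a*c = 4) by lia.
  destruct (Z.Even_or_Odd b) as [[j Hj]|[j Hj]]; subst b.
  - destruct Hc as [e|[e|[e|e]]].
    + assert (4*(j*j - a*c) = 1) by lia. lia.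
    + assert (4*(j*j - a*c) = 2) by lia. lia.
    + assert (4*(j*j - a*c) = 3) by lia. lia.
    + apply N. exists 2. lia.
  - destruct Hc as [e|[e|[e|e]]].
    + apply N. exists 1. lia.
    + assert (4*(j*j + j - a*c) = 1) by lia. lia.
    + assert (4*(j*j + j - a*c) = 2) by lia. lia.
    + assert (4*(j*j + j - a*c) = 3) by lia. lia.
Qed.

Lemma c_nonzero (a b c : Z) : ~ (exists r, r * r = qdisc a b c) -> c <> 0.
Proof. intros N E. apply N. exists b. unfold qdisc. rewrite E. ring. Qed.

Lemma sq_of_ratio (D y m : Z) : m <> 0 -> y * y = D * (m * m) -> exists r, r * r = D.
Proof.
  intros Hm E.
  set (g := Z.gcd y m).
  assert (Hg0 : 0 <= g) by apply Z.gcd_nonneg.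
  assert (Hgn : g <> 0) by (intro Z0; apply Z.gcd_eq_0_r in Z0; lia).
  assert (Ey : y = g * (y / g)) by (apply divex; [exact Hgn | apply Z.gcd_divide_l]).
  assert (Em : m = g * (m / g)) by (apply divex; [exact Hgn | apply Z.gcd_divide_r]).
  assert (G : Z.gcd (y / g) (m / g) = 1) by (apply Z.gcd_div_gcd; auto).
  set (y' := y / g) in *. set (m' := m / g) in *. clearbody y' m'.
  assert (E' : y' * y' = D * (m' * m')).
  { apply Z.mul_reg_l with (g*g); [apply Z.neq_mul_0; lia|].
    transitivity (y*y); [rewrite Ey; ring|]. rewrite E, Em. ring. }
  assert (Hd : (m' | y' * y')) by (exists (D * m'); rewrite E'; ring).
  assert (Hd1 : (m' | y')) by (apply Z.gauss with y'; [exact Hd | rewrite Z.gcd_comm; exact G]).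
  assert (Hd2 : (m' | 1)) by (rewrite <- G; apply Z.gcd_greatest; [exact Hd1 | apply Z.divide_refl]).
  apply Z.divide_1_r in Hd2. exists y'. rewrite E'. destruct Hd2 as [->| ->]; ring.
Qed.

Lemma k0_empty (a b c m n : Z) : ~ (exists r, r * r = qdisc a b c) -> m <> 0 -> qform a b c m n <> 0.
Proof.
  intros N Hm E. apply N.
  pose proof (c_nonzero a b c N) as Hc.
  apply (sq_of_ratio _ (2*c*n + b*m) m Hm).
  unfold qdisc. transitivity (4*c*qform a b c m n + (b*b - 4*a*c)*(m*m)).
  - unfold qform. ring.
  - rewrite E. ring.
Qed.

Lemma gcd3_bezout (a b c : Z) : Z.gcd (Z.gcd a b) c = 1 -> exists t1 t2 t3, t1*a + t2*b + t3*c = 1.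
Proof.
  intro H.
  apply Zgcd_1_rel_prime, rel_prime_bezout in H. destruct H as [u v Huv].
  pose proof (Zgcd_is_gcd a b) as G. apply Zis_gcd_bezout in G. destruct G as [u' v' Huv'].
  exists (u*u'), (u*v'), v. rewrite <- Huv, <- Huv'. ring.
Qed.

Open Scope R_scope.

Lemma exp_ident (K D lam : R) : 1 <= K -> 1 <= D ->
  Rpower K (lam/8) * Rpower (4*K) (lam/8) * sqrt D * / Rpower (Rpower (K / (D*D)) (/4)) lam
  = Rpower 4 (lam/8) * Rpower D ((1+lam)/2).
Proof.
  intros HK HD.
  rewrite <- Rpower_sqrt by lra. rewrite Rpower_mult.
  unfold Rpower. rewrite ln_mult by lra. unfold Rdiv at 3.
  rewrite ln_mult by (try apply Rinv_0_lt_compat; nra).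
  rewrite ln_Rinv by nra. rewrite ln_mult by lra.
  rewrite <- exp_Ropp, <- !exp_plus. f_equal. field.
Qed.

Lemma sqrt_bound (D : Z) : (0 <= D)%Z -> INR (Z.to_nat (Z.sqrt (4 * D))) <= 2 * sqrt (IZR D).
Proof.
  intro HD. rewrite INR_IZR_INZ, Z2Nat.id by apply Z.sqrt_nonneg.
  set (s := Z.sqrt (4*D)).
  assert (Hs : (s * s <= 4 * D)%Z) by (apply Z.sqrt_spec; lia).
  assert (Hs0 : (0 <= s)%Z) by apply Z.sqrt_nonneg.
  rewrite <- (sqrt_square (IZR s)) by (apply IZR_le; lia).
  replace (2 * sqrt (IZR D)) with (sqrt (IZR (4 * D))).
  - apply sqrt_le_1_alt. rewrite <- mult_IZR. apply IZR_le. exact Hs.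
  - rewrite mult_IZR, sqrt_mult by (try apply IZR_le; lra || lia).
    replace (IZR 4) with (2*2) by (simpl; lra). rewrite sqrt_square by lra. reflexivity.
Qed.

Lemma prim_bound (lam C : R) (a b c k t1 t2 t3 : Z) (Dk D4k : list Z) :
  0 < lam -> 1 <= C -> (t1*a + t2*b + t3*c = 1)%Z -> (5 <= qdisc a b c)%Z -> c <> 0%Z -> k <> 0%Z ->
  (forall g, (0 < g)%Z -> (g | k)%Z -> In g Dk) -> (forall g, (0 < g)%Z -> (g | 4*k)%Z -> In g D4k) ->
  INR (length Dk) <= C * Rpower (IZR (Z.abs k)) (lam/8) ->
  INR (length D4k) <= C * Rpower (4 * IZR (Z.abs k)) (lam/8) ->
  forall L, NoDup L -> Forall (A_set a b c k) L ->
  Defs.list_sum (fun p => / Rpower (IZR (Z.abs (fst p))) lam) L <=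
   (4 + 8 * C * C * Rpower 4 (lam/8) * / (1 - / Rpower (11/10) lam)) * Rpower (IZR (qdisc a b c)) ((1+lam)/2).
Proof.
  intros Hl HC Ht HD Hc Hk HDk HD4k L1 L2 L ND HF.
  eapply Rle_trans; [apply (core_bound a b c k t1 t2 t3 Dk D4k lam); eassumption|].
  set (D := qdisc a b c) in *.
  set (A := / Rpower (Rpower (IZR (Z.abs k) / (IZR D * IZR D)) (/4)) lam).
  set (B := / (1 - / Rpower (11/10) lam)).
  assert (Hrho : 1 < Rpower (11/10) lam) by (apply Rpower_gt1; lra).
  assert (HB : 0 < B).
  { unfold B. apply Rinv_0_lt_compat.
    assert (/ Rpower (11/10) lam < 1) by (rewrite <- Rinv_1; apply Rinv_lt_contravar; lra). lra. }
  assert (HA : 0 < A) by (apply Rinv_0_lt_compat, Rpower_pos).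
  assert (HK1 : 1 <= IZR (Z.abs k)) by (apply IZR_le; lia).
  assert (HD1 : 1 <= IZR D) by (apply IZR_le; lia).
  assert (HP : 1 <= Rpower (IZR D) ((1+lam)/2)) by (apply Rpower_ge1; lra).
  rewrite length_keylist, !mult_INR.
  replace (INR 4) with 4 by (simpl; lra).
  assert (S := sqrt_bound D ltac:(lia)).
  assert (E := exp_ident (IZR (Z.abs k)) (IZR D) lam HK1 HD1). fold A in E.
  assert (P1 : 0 <= INR (length Dk)) by apply pos_INR.
  assert (P2 : 0 <= INR (length D4k)) by apply pos_INR.
  assert (P3 : 0 <= INR (Z.to_nat (Z.sqrt (4 * D)))) by apply pos_INR.
  assert (Q : 4 * INR (length Dk) * (INR (length D4k) * INR (Z.to_nat (Z.sqrt (4 * D)))) * A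
              <= 8 * C * C * (Rpower 4 (lam/8) * Rpower (IZR D) ((1+lam)/2))).
  { rewrite <- E.
    apply Rle_trans with (4 * (C * Rpower (IZR (Z.abs k)) (lam/8)) * ((C * Rpower (4 * IZR (Z.abs k)) (lam/8)) * (2 * sqrt (IZR D))) * A).
    - apply Rmult_le_compat_r; [lra|]. apply Rmult_le_compat; try nra.
    - right. ring. }
  assert (Q2 : 4 * INR (length Dk) * (INR (length D4k) * INR (Z.to_nat (Z.sqrt (4 * D)))) * A * B
              <= 8 * C * C * (Rpower 4 (lam/8) * Rpower (IZR D) ((1+lam)/2)) * B)
    by (apply Rmult_le_compat_r; lra).
  assert (Q3 : 4 <= 4 * Rpower (IZR D) ((1+lam)/2)) by lra.
  unfold B in *. nra.
Qed.

Module DivB.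
From mathcomp Require Import all_boot.
Local Open Scope nat_scope.
Lemma divisors_sub (n : nat) : (1 < n)%N ->
  (size (divisors n) <= size (divisors (n %/ (pdiv n) ^ logn (pdiv n) n)) * (logn (pdiv n) n).+1)%N.
Proof.
move=> n1.
have pp := pdiv_prime n1.
have n0 : 0 < n by apply: ltn_trans n1.
set p := pdiv n. set e := logn p n.
case: (pfactor_coprime pp n0) => m cpm defn.
have pe0 : 0 < p ^ e by rewrite expn_gt0 prime_gt0.
have -> : n %/ p ^ e = m by rewrite [in LHS]defn mulnK.
have m0 : 0 < m by move: n0; rewrite defn muln_gt0 => /andP[].
rewrite -(size_iota 0 e.+1) -(size_allpairs (fun x j => x * p ^ j)).
apply: uniq_leq_size; first exact: divisors_uniq.
move=> d; rewrite -dvdn_divisors // => dn.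
have d0 : 0 < d by apply: dvdn_gt0 dn.
case: (pfactor_coprime pp d0) => d' cpd' defd.
rewrite defd; apply: allpairs_f.
  rewrite -dvdn_divisors //.
  have : d' %| m * p ^ e by rewrite -defn; apply: dvdn_trans dn; rewrite defd dvdn_mulr.
  by rewrite Gauss_dvdl // coprimeXr // coprime_sym.
rewrite mem_iota /= add0n ltnS.
rewrite -(pfactor_dvdn _ pp n0); apply: dvdn_trans dn; by rewrite [X in _ %| X]defd dvdn_mull.

Qed.

Local Open Scope R_scope.

Lemma ln_le' (x y : R) : (0 < x) -> (x <= y) -> (ln x <= ln y).
Proof. move=> x0 /Rle_lt_or_eq_dec [h|->]; [left; exact: ln_increasing | lra]. Qed.

Lemma INR_expn p e : INR (p ^ e) = (INR p ^ e).
Proof. elim: e => [|e IH] //=; by rewrite expnS -multE mult_INR IH. Qed.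

Lemma Rpower_nat_pow (p e : nat) (eps : R) : (0 < p)%N ->
  Rpower (INR (p ^ e)) eps = exp (INR e * eps * ln (INR p)).
Proof.
move=> p0; have hp : (0 < INR p) by apply: lt_0_INR; apply/ltP.
by rewrite INR_expn -Rpower_pow // Rpower_mult /Rpower.
Qed.

Lemma dbound_aux (eps : R) (P0 : nat) : 0 < eps -> exp (/eps) <= INR P0 ->
  forall N n t, (n < N)%N -> (0 < n)%N ->
  (forall d, (1 < d)%N -> d %| n -> (t <= d)%N) ->
  INR (size (divisors n)) <= Rpower (INR n) eps * (1 + /(eps * ln 2)) ^ (P0 - t).
Proof.
move=> e0 hP0.
set K := 1 + /(eps * ln 2).
have l2 : 0 < ln 2 by have := ln_lt_2; lra.
have K1 : 1 <= K.
  rewrite /K; have : 0 < / (eps * ln 2) by apply: Rinv_0_lt_compat; nra. lra.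
elim=> [//|N IH] n t nN n0 ht.
case: (ltngtP n 1) => [|n1|->].
- by rewrite ltnNge n0.
- have pp := pdiv_prime n1.
  have p1 := prime_gt1 pp.
  set p := pdiv n in pp p1 *.
  have tp : (t <= p)%N by apply: ht => //; exact: pdiv_dvd.
  case: (pfactor_coprime pp n0) => m cpm defn.
  have hsub := divisors_sub n n1; rewrite -/p in hsub.
  set e := logn p n in defn hsub.
  have pe0 : (0 < p ^ e)%N by rewrite expn_gt0 prime_gt0.
  have me : (n %/ p ^ e = m)%N by rewrite [in LHS]defn mulnK.
  rewrite me in hsub.
  have m0 : (0 < m)%N by move: n0; rewrite defn muln_gt0 => /andP[].
  have e1 : (0 < e)%N by rewrite /e -(pfactor_dvdn 1 pp n0) expn1 /p pdiv_dvd.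
  have mn : (m < n)%N.
    have pe1 : (1 < p ^ e)%N.
      apply: leq_trans p1 _. rewrite -{1}(expn1 p) leq_exp2l //; exact: (prime_gt1 pp).
    by rewrite defn -{1}(muln1 m) ltn_pmul2l.
  have hm : forall d, (1 < d)%N -> d %| m -> (p.+1 <= d)%N.
    move=> d d1 dm.
    have dn : d %| n by rewrite defn; apply: dvdn_mulr.
    have := pdiv_min_dvd d1 dn; rewrite -/p leq_eqVlt => /orP[/eqP pd|//].
    by move: cpm; rewrite pd /coprime (gcdn_idPl dm) => /eqP d1'; rewrite d1' in d1.
  have IHm := IH m p.+1 (leq_trans mn nN) m0 hm.
  have hp : 0 < INR p by apply: lt_0_INR; apply/ltP; apply: ltn_trans p1.
  have hm' : 0 < INR m by apply: lt_0_INR; apply/ltP.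
  have hpe : 0 < INR (p ^ e) by apply: lt_0_INR; apply/ltP.
  have Hsz : INR (size (divisors n)) <= INR (size (divisors m)) * INR e.+1.
    rewrite -mult_INR; apply: le_INR; apply/leP; exact: hsub.
  have Hn : Rpower (INR n) eps = Rpower (INR m) eps * Rpower (INR (p ^ e)) eps.
    by rewrite Rpower_mult_distr // -mult_INR multE -defn.
  rewrite Hn (Rpower_nat_pow _ _ _ (prime_gt0 pp)).
  set E := exp _.
  have lp2 : ln 2 <= ln (INR p).
    apply: ln_le'; first lra. by apply: (le_INR 2); apply/leP.
  have HE : 1 + INR e * eps * ln (INR p) <= E by apply: exp_ineq1_le.
  have e0' : 0 <= INR e by apply: pos_INR.
  have HS : INR e.+1 = INR e + 1 by rewrite S_INR.
  have Rm0 : 0 < Rpower (INR m) eps by apply: exp_pos.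
  have dm0 : 0 <= INR (size (divisors m)) by apply: pos_INR.
  have KP : 0 <= K ^ (P0 - p.+1) by apply: pow_le; lra.
  case: (ltnP p P0) => pP0.
  + have Kle : K ^ (P0 - p.+1) * K <= K ^ (P0 - t).
      rewrite Rmult_comm tech_pow_Rmult; apply: Rle_pow => //; apply/leP.
      rewrite -subSn //; exact: leq_sub2l.
    have HeK : INR e.+1 <= K * E.
      rewrite HS /K.
      have x0 : 0 < eps * ln 2 by nra.
      have : INR e * eps * ln 2 <= INR e * eps * ln (INR p).
        apply: Rmult_le_compat_l => //; nra.
      have hinv : (eps * ln 2) * / (eps * ln 2) = 1 by field; lra.
      have : 0 < / (eps * ln 2) by apply: Rinv_0_lt_compat.
      nra.
    apply: (Rle_trans _ _ _ Hsz).
    apply: (Rle_trans _ (Rpower (INR m) eps * K ^ (P0 - p.+1) * INR e.+1)).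
      apply: Rmult_le_compat_r; [exact: pos_INR | exact: IHm].
    have : K ^ (P0 - p.+1) * INR e.+1 <= K ^ (P0 - p.+1) * (K * E).
      by apply: Rmult_le_compat_l.
    have : K ^ (P0 - p.+1) * (K * E) <= K ^ (P0 - t) * E.
      rewrite -Rmult_assoc; apply: Rmult_le_compat_r => //; left; exact: exp_pos.
    nra.
  + have z : (P0 - p.+1 = 0)%N by apply/eqP; rewrite subn_eq0; apply: leq_trans pP0 _.
    rewrite z /= Rmult_1_r in IHm.
    have Kt : 1 <= K ^ (P0 - t) by apply: pow_R1_Rle.
    have HeE : INR e.+1 <= E.
      rewrite HS.
      have lP : / eps <= ln (INR p).
        rewrite -[/ eps]ln_exp; apply: ln_le'; first exact: exp_pos.
        apply: (Rle_trans _ _ _ hP0); apply: le_INR; apply/leP; exact: pP0.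
      have : 1 <= eps * ln (INR p).
        have hinv : eps * / eps = 1 by field; lra.
        nra.
      nra.
    apply: (Rle_trans _ _ _ Hsz).
    have E0 : 0 < E by apply: exp_pos.
    have : INR (size (divisors m)) * INR e.+1 <= Rpower (INR m) eps * E.
      apply: Rmult_le_compat => //; exact: pos_INR.
    have : Rpower (INR m) eps * E <= Rpower (INR m) eps * E * K ^ (P0 - t).
      have : 0 < Rpower (INR m) eps * E by nra. nra.
    nra.
- have -> : size (divisors 1) = 1%N by [].
  have -> : Rpower (INR 1) eps = 1 by rewrite /Rpower /= ln_1 Rmult_0_r exp_0.
  rewrite Rmult_1_l; apply: pow_R1_Rle => //.
Qed.

Lemma dbound (eps : R) : 0 < eps -> exists C, 1 <= C /\
  forall n, (0 < n)%N -> INR (size (divisors n)) <= C * Rpower (INR n) eps.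
Proof.
move=> e0; case: (INR_unbounded (exp (/eps))) => P0 hP0.
exists ((1 + /(eps * ln 2)) ^ P0); split.
  apply: pow_R1_Rle.
  have l2 : 0 < ln 2 by have := ln_lt_2; lra.
  have : 0 < / (eps * ln 2) by apply: Rinv_0_lt_compat; nra. lra.
move=> n n0.
have := dbound_aux eps P0 e0 (Rlt_le _ _ hP0) n.+1 n 0 (ltnSn n) n0 (fun d _ _ => leq0n d).
by rewrite subn0 Rmult_comm.
Qed.

Lemma divisors_In (d n : nat) : (0 < n)%N -> d %| n -> List.In d (divisors n).
Proof.
move=> n0; rewrite dvdn_divisors //; elim: (divisors n) => //= a l IH.
rewrite in_cons => /orP[/eqP ->|h]; [by left | by right; apply: IH].
Qed.


Lemma divisors_In_nat (d n q : nat) : (0 < n)%N -> n = Nat.mul q d -> List.In d (divisors n).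
Proof.
  move=> n0 E; apply: divisors_In => //; apply/dvdnP; exists q; exact: E.
Qed.

End DivB.

Open Scope R_scope.

Lemma divs_In (g n : Z) : (0 < g)%Z -> (0 < n)%Z -> (g | n)%Z ->
  In g (map Z.of_nat (prime.divisors (Z.to_nat n))).
Proof.
  intros Hg Hn [q Hq].
  assert (Hq0 : (0 < q)%Z) by nia.
  replace g with (Z.of_nat (Z.to_nat g)) by (apply Z2Nat.id; lia).
  apply in_map. apply (DivB.divisors_In_nat _ _ (Z.to_nat q)).
  - apply (ssrbool.introT ssrnat.ltP). lia.
  - rewrite Hq, Z2Nat.inj_mul by lia. reflexivity.
Qed.

Lemma list_nil_of_empty (P : Z*Z -> Prop) (L : list (Z*Z)) :
  (forall p, P p -> False) -> Forall P L -> L = [].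
Proof.
  intros H HF. destruct L as [|p l]; [reflexivity|].
  inversion HF; subst. exfalso; eapply H; eassumption.
Qed.

Theorem mainTheorem7 (lam : R) (Hlam : 0 < lam) :
  exists C : R,
    forall a b c : Z,
      Z.lt 0 (qdisc a b c) ->
      ~ (exists r : Z, (r * r)%Z = qdisc a b c) ->
      forall k : Z,
        nonneg_sum_le (A_set a b c k)
          (fun p => / Rpower (IZR (Z.abs (fst p))) lam)
          (C * Rpower (IZR (qdisc a b c)) ((1 + lam) / 2)).
Proof.
  destruct (DivB.dbound (lam/8) ltac:(lra)) as [C [HC1 HCb]].
  set (Cf := 4 + 8 * C * C * Rpower 4 (lam/8) * / (1 - / Rpower (11/10) lam)).
  exists Cf. intros a b c HD HN k L ND HF.
  assert (Hrho : 1 < Rpower (11/10) lam) by (apply Rpower_gt1; lra).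
  assert (HCf : 0 <= Cf).
  { unfold Cf. assert (/ Rpower (11/10) lam < 1) by (rewrite <- Rinv_1; apply Rinv_lt_contravar; lra).
    assert (0 < / (1 - / Rpower (11/10) lam)) by (apply Rinv_0_lt_compat; lra).
    assert (0 < Rpower 4 (lam/8)) by apply Rpower_pos.
    assert (0 <= 8 * C * C * Rpower 4 (lam/8) * / (1 - / Rpower (11/10) lam)) by (repeat apply Rmult_le_pos; lra).
    lra. }
  assert (HPD : 0 < Rpower (IZR (qdisc a b c)) ((1 + lam) / 2)) by apply Rpower_pos.
  assert (Hemp : L = [] -> Defs.list_sum (fun p => / Rpower (IZR (Z.abs (fst p))) lam) L
                 <= Cf * Rpower (IZR (qdisc a b c)) ((1 + lam) / 2)).
  { intros ->. simpl. nra. }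
  destruct (Z.eq_dec k 0) as [Hk0|Hk].
  { apply Hemp. apply (list_nil_of_empty (A_set a b c k)); [|exact HF].
    intros p [Hp Hq]. apply (k0_empty a b c (fst p) (snd p) HN Hp). rewrite Hq; exact Hk0. }
  set (g0 := Z.gcd (Z.gcd a b) c).
  assert (Hg0 : (0 <= g0)%Z) by apply Z.gcd_nonneg.
  assert (Ga : (g0 | a)%Z) by (apply Z.divide_trans with (Z.gcd a b); [apply Z.gcd_divide_l | apply Z.gcd_divide_l]).
  assert (Gb : (g0 | b)%Z) by (apply Z.divide_trans with (Z.gcd a b); [apply Z.gcd_divide_l | apply Z.gcd_divide_r]).
  assert (Gc : (g0 | c)%Z) by apply Z.gcd_divide_r.
  assert (Hg0n : g0 <> 0%Z).
  { intro E. destruct Ga as [xa Ea]. destruct Gb as [xb Eb]. destruct Gc as [xc Ec].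
    rewrite E in Ea, Eb, Ec. unfold qdisc in HD. rewrite Ea, Eb, Ec in HD. lia. }
  assert (Ea : a = (g0 * (a / g0))%Z) by (apply divex; assumption).
  assert (Eb : b = (g0 * (b / g0))%Z) by (apply divex; assumption).
  assert (Ec : c = (g0 * (c / g0))%Z) by (apply divex; assumption).
  set (a0 := (a / g0)%Z) in *. set (b0 := (b / g0)%Z) in *. set (c0 := (c / g0)%Z) in *.
  clearbody a0 b0 c0.
  assert (Eq : forall m n, qform a b c m n = (g0 * qform a0 b0 c0 m n)%Z).
  { intros m n. unfold qform. rewrite Ea, Eb, Ec. ring. }
  assert (ED : qdisc a b c = (g0 * g0 * qdisc a0 b0 c0)%Z).
  { unfold qdisc. rewrite Ea, Eb, Ec. ring. }
  destruct (Znumtheory.Zdivide_dec g0 k) as [Gk|Gk].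
  2:{ apply Hemp. apply (list_nil_of_empty (A_set a b c k)); [|exact HF].
      intros p [Hp Hq]. apply Gk. rewrite <- Hq, Eq. exists (qform a0 b0 c0 (fst p) (snd p)). ring. }
  assert (Ek : k = (g0 * (k / g0))%Z) by (apply divex; assumption).
  set (k0 := (k / g0)%Z) in *.
  assert (HF0 : Forall (A_set a0 b0 c0 k0) L).
  { apply Forall_impl with (A_set a b c k); [|exact HF].
    intros p [Hp Hq]. split; [exact Hp|]. apply Z.mul_reg_l with g0; [exact Hg0n|].
    rewrite <- Eq, <- Ek. exact Hq. }
  assert (HD0 : (0 < qdisc a0 b0 c0)%Z) by nia.
  assert (HN0 : ~ (exists r, (r * r)%Z = qdisc a0 b0 c0)).
  { intros [r Hr]. apply HN. exists (g0 * r)%Z. rewrite ED, <- Hr. ring. }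
  assert (Hk0 : k0 <> 0%Z) by (intro E; rewrite E in Ek; lia).
  assert (HD5 := disc_ge5 a0 b0 c0 HD0 HN0).
  assert (Hc0 := c_nonzero a0 b0 c0 HN0).
  assert (Hprim : Z.gcd (Z.gcd a0 b0) c0 = 1%Z).
  { assert (E : g0 = (g0 * Z.gcd (Z.gcd a0 b0) c0)%Z).
    { unfold g0 at 1. rewrite Ea, Eb, Ec.
      rewrite Z.gcd_mul_mono_l, (Z.abs_eq g0) by lia.
      rewrite Z.gcd_mul_mono_l, (Z.abs_eq g0) by lia. reflexivity. }
    assert (0 <= Z.gcd (Z.gcd a0 b0) c0)%Z by apply Z.gcd_nonneg. nia. }
  destruct (gcd3_bezout a0 b0 c0 Hprim) as [t1 [t2 [t3 Ht]]].
  set (n0 := Z.abs k0).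
  assert (Hn0 : (0 < n0)%Z) by (unfold n0; lia).
  assert (B := prim_bound lam C a0 b0 c0 k0 t1 t2 t3
                 (map Z.of_nat (prime.divisors (Z.to_nat n0)))
                 (map Z.of_nat (prime.divisors (Z.to_nat (4 * n0)))) Hlam HC1 Ht HD5 Hc0 Hk0).
  assert (Hle : Defs.list_sum (fun p => / Rpower (IZR (Z.abs (fst p))) lam) L <=
      Cf * Rpower (IZR (qdisc a0 b0 c0)) ((1+lam)/2)).
  { apply B; try assumption.
    - intros g Hg Hgk. apply divs_In; [exact Hg | exact Hn0 | apply Z.divide_abs_r; exact Hgk].
    - intros g Hg Hgk. apply divs_In; [exact Hg | lia |].
      replace (4 * n0)%Z with (Z.abs (4 * k0)) by (unfold n0; rewrite Z.abs_mul; reflexivity).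
      apply Z.divide_abs_r; exact Hgk.
    - rewrite length_map.
      replace (IZR (Z.abs k0)) with (INR (Z.to_nat n0)) by (rewrite INR_IZR_INZ, Z2Nat.id by lia; reflexivity).
      apply HCb. apply (ssrbool.introT ssrnat.ltP). lia.
    - rewrite length_map.
      replace (4 * IZR (Z.abs k0)) with (INR (Z.to_nat (4 * n0))) by
        (rewrite INR_IZR_INZ, Z2Nat.id, mult_IZR by lia; reflexivity).
      apply HCb. apply (ssrbool.introT ssrnat.ltP). lia. }
  apply Rle_trans with (1 := Hle).
  apply Rmult_le_compat_l; [exact HCf|].
  apply Rle_Rpower_l; [lra|]. split.
  - apply IZR_lt. exact HD0.
  - apply IZR_le. rewrite ED.
    assert (H1 : (1 <= g0 * g0)%Z) by nia.
    assert (H2 : (1 * qdisc a0 b0 c0 <= g0 * g0 * qdisc a0 b0 c0)%Z)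
      by (apply Z.mul_le_mono_nonneg_r; lia).
    lia.
Qed.
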